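(* Let $\varphi$ be a 3CNF formula with variables $x_1,\dots,x_n$ and clauses $c_1,\dots,c_m$, and let $I(\varphi)$ be the LA-MAPF instance constructed from $\varphi$ as described in the context. If $\varphi$ is satisfiable, then $I(\varphi)$ has a solution.
   Context: LA-MAPF. An instance consists of an undirected graph $G=(V,E)$ embedded in $\mathbb{R}^2$ (each vertex is a point, distinct vertices are distinct points, each edge is the straight segment between its endpoints), agents $a_1,\dots,a_k$ that are disks of a common radius $r>0$ centered at vertices, and start and goal configurations. A configuration assigns to each agent a vertex, distinct agents at distinct vertices. Two consecutive configurations form a transition iff exactly one agent moves along an edge from its vertex to an adjacent vertex and all other agents stay put. A vertex conflict occurs if two agents are at vertices at Euclidean distance $<2r$; an edge conflict occurs if, during a transition in which an agent moves along the segment $[u,v]$, some other (stationary) agent is at a vertex $v'$ at Euclidean distance $<2r$ from the segment $[u,v]$. A solution is a sequence of configurations from the start to the goal configuration in which consecutive configurations form transitions and there are no vertex or edge conflicts. The construction $I(\varphi)$. Let $\varphi$ be a conjunction of $m\ge1$ clauses over variables $x_1,\dots,x_n$ ($n\ge1$), each clause a disjunction of exactly three literals on three distinct variables. Set $r=m$ and $P=2m+1$. Vertices: (Variables) for each $i=1,\dots,n$: $A_i=(Pi,1)$, $B_i=(Pi,\ 4m^2n+2m^2+2mn+5m-1)$, $C_i=(Pi,\ 2m^2+m)$; edges $A_iB_i$, $A_iC_i$. (Clauses) for each $j=1,\dots,m$: $D_j=(0,\ Pj+4m^2n+2m^2+4mn+3m+n-2)$, $E_j=(0,\ j+2m^2n+2m^2+mn+3m-1)$,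 $G_j=(0,\ j+2m^2n+2m^2+mn+2m-1)$, $H_j=(0,\ Pj)$, $I_j=(0,\ Pj+4m^2n+4m^2+4mn+5m+n-2)$, and for each literal of clause $c_j$: if the literal is $x_i$, a vertex $F_j^{x_i}=(Pi,\ j+2m^2+2m-1)$; if it is $\neg x_i$, a vertex $F_j^{\neg x_i}=(Pi,\ j+4m^2n+2m^2+2mn+3m-1)$. Edges: $D_jE_j$, $G_jH_j$, $H_jI_j$, and for each of the three $F$-vertices $F$ of clause $j$, edges $E_jF$ and $FG_j$. (Blocking) $J_i=(0,\ Pi+4m^2n+2m^2+2mn+3m-2)$ for $i=1,\dots,n$, $K=(0,0)$, $L_i=(Pi,0)$ for $i=1,\dots,n$; edges $J_{i}J_{i+1}$ and $L_iL_{i+1}$ for $1\le i<n$, $J_1K$ and $KL_1$. Agents (all of radius $r=m$): for each $i$, a v-agent with start and goal $A_i$; for each $j$, a c-agent with start $D_j$ and goal $I_j$; and $n+1$ b-agents, one starting at each of $J_1,\dots,J_n,K$, each with goal equal to its start. The graph has $5n+8m+1$ vertices and there are $2n+m+1$ agents. *)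

(* Defs.v *)
From Stdlib Require Import Reals Lra Lia Arith List.
Open Scope R_scope.

Record lamapf := mkLAMAPF {
  V : Type;
  vvalid : V -> Prop;
  posx : V -> R;
  posy : V -> R;
  adj : V -> V -> Prop;          (* undirected edge relation of G *)
  Ag : Type;
  avalid : Ag -> Prop;
  rad : R;
  start : Ag -> V;
  goal : Ag -> V }.

Definition config (I : lamapf) := Ag I -> V I.

Definition dist2 (x1 y1 x2 y2 : R) : R := sqrt ((x1 - x2) ^ 2 + (y1 - y2) ^ 2).

Definition is_config (I : lamapf) (c : config I) : Prop :=
  (forall a, avalid I a -> vvalid I (c a)) /\
  (forall a b, avalid I a -> avalid I b -> a <> b -> c a <> c b).

Definition vertex_conflict (I : lamapf) (c : config I) : Prop :=
  exists a b, avalid I a /\ avalid I b /\ a <> b /\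
    dist2 (posx I (c a)) (posy I (c a)) (posx I (c b)) (posy I (c b)) < 2 * rad I.

(* Euclidean distance from vertex w to the segment [u,v] is < 2r
   (the segment is compact, so the distance is attained at some point) *)
Definition near_segment (I : lamapf) (w u v : V I) : Prop :=
  exists t : R, 0 <= t <= 1 /\
    dist2 (posx I w) (posy I w)
          (posx I u + t * (posx I v - posx I u))
          (posy I u + t * (posy I v - posy I u)) < 2 * rad I.

Definition moves (I : lamapf) (c c' : config I) (a : Ag I) : Prop :=
  avalid I a /\ adj I (c a) (c' a) /\
  (forall b, avalid I b -> b <> a -> c' b = c b).

Definition transition (I : lamapf) (c c' : config I) : Prop :=
  exists a, moves I c c' a.

Definition edge_conflict (I : lamapf) (c c' : config I) : Prop :=
  exists a b, moves I c c' a /\ avalid I b /\ b <> a /\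
    near_segment I (c b) (c a) (c' a).

Definition is_solution (I : lamapf) (T : nat) (s : nat -> config I) : Prop :=
  (forall a, avalid I a -> s 0%nat a = start I a) /\
  (forall a, avalid I a -> s T a = goal I a) /\
  (forall t, (t <= T)%nat -> is_config I (s t) /\ ~ vertex_conflict I (s t)) /\
  (forall t, (t < T)%nat ->
      transition I (s t) (s (S t)) /\ ~ edge_conflict I (s t) (s (S t))).

Definition has_solution (I : lamapf) : Prop :=
  exists (T : nat) (s : nat -> config I), is_solution I T s.

(* literal x_i (lpos = true) or ~x_i (lpos = false), variable index i in 1..n *)
Record lit := mkLit { lvar : nat; lpos : bool }.

(* formula with variables x_1..x_n and clauses c_1..c_m; cl j k (k < 3) is the
   k-th literal of clause c_j *)
Definition wf_3cnf (n m : nat) (cl : nat -> nat -> lit) : Prop :=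
  (1 <= n)%nat /\ (1 <= m)%nat /\
  forall j, (1 <= j <= m)%nat ->
    (forall k, (k < 3)%nat -> (1 <= lvar (cl j k) <= n)%nat) /\
    lvar (cl j 0%nat) <> lvar (cl j 1%nat) /\ lvar (cl j 0%nat) <> lvar (cl j 2%nat) /\
    lvar (cl j 1%nat) <> lvar (cl j 2%nat).

Definition lit_true (asg : nat -> bool) (l : lit) : Prop := asg (lvar l) = lpos l.

Definition satisfiable (n m : nat) (cl : nat -> nat -> lit) : Prop :=
  exists asg : nat -> bool,
    forall j, (1 <= j <= m)%nat -> exists k, (k < 3)%nat /\ lit_true asg (cl j k).

Inductive vtx :=
  | VA (i : nat) | VB (i : nat) | VC (i : nat)
  | VD (j : nat) | VE (j : nat) | VF (j k : nat) (* F-vertex of k-th literal of c_j *)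
  | VG (j : nat) | VH (j : nat) | VI (j : nat)
  | VJ (i : nat) | VK | VL (i : nat).

Definition in1 (i N : nat) : Prop := (1 <= i <= N)%nat.

Definition vtx_valid (n m : nat) (v : vtx) : Prop :=
  match v with
  | VA i | VB i | VC i | VJ i | VL i => in1 i n
  | VD j | VE j | VG j | VH j | VI j => in1 j m
  | VF j k => in1 j m /\ (k < 3)%nat
  | VK => True
  end.

Definition Pc (m : nat) : R := 2 * INR m + 1.

Definition vx (n m : nat) (cl : nat -> nat -> lit) (v : vtx) : R :=
  let P := Pc m in
  match v with
  | VA i | VB i | VC i | VL i => P * INR i
  | VF j k => P * INR (lvar (cl j k))
  | _ => 0
  end.

Definition vy (n m : nat) (cl : nat -> nat -> lit) (v : vtx) : R :=
  let P := Pc m in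
  let M := INR m in
  let N := INR n in
  match v with
  | VA i => 1
  | VB i => 4 * M ^ 2 * N + 2 * M ^ 2 + 2 * M * N + 5 * M - 1
  | VC i => 2 * M ^ 2 + M
  | VD j => P * INR j + 4 * M ^ 2 * N + 2 * M ^ 2 + 4 * M * N + 3 * M + N - 2
  | VE j => INR j + 2 * M ^ 2 * N + 2 * M ^ 2 + M * N + 3 * M - 1
  | VG j => INR j + 2 * M ^ 2 * N + 2 * M ^ 2 + M * N + 2 * M - 1
  | VH j => P * INR j
  | VI j => P * INR j + 4 * M ^ 2 * N + 4 * M ^ 2 + 4 * M * N + 5 * M + N - 2
  | VF j k =>
      if lpos (cl j k)
      then INR j + 2 * M ^ 2 + 2 * M - 1
      else INR j + 4 * M ^ 2 * N + 2 * M ^ 2 + 2 * M * N + 3 * M - 1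
  | VJ i => P * INR i + 4 * M ^ 2 * N + 2 * M ^ 2 + 2 * M * N + 3 * M - 2
  | VK => 0
  | VL i => 0
  end.

(* the listed edges, in one orientation *)
Definition base_edge (n m : nat) (u v : vtx) : Prop :=
  (exists i, in1 i n /\ ((u = VA i /\ v = VB i) \/ (u = VA i /\ v = VC i))) \/
  (exists j, in1 j m /\
     ((u = VD j /\ v = VE j) \/ (u = VG j /\ v = VH j) \/ (u = VH j /\ v = VI j) \/
      (exists k, (k < 3)%nat /\ ((u = VE j /\ v = VF j k) \/ (u = VF j k /\ v = VG j))))) \/
  (exists i, (1 <= i < n)%nat /\ ((u = VJ i /\ v = VJ (S i)) \/ (u = VL i /\ v = VL (S i)))) \/
  (u = VJ 1%nat /\ v = VK) \/
  (u = VK /\ v = VL 1%nat).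

Definition vtx_adj (n m : nat) (u v : vtx) : Prop :=
  base_edge n m u v \/ base_edge n m v u.

(* agents: v-agents, c-agents, b-agents at J_1..J_n, b-agent at K *)
Inductive agent := Av (i : nat) | Acl (j : nat) | AbJ (i : nat) | AbK.

Definition agent_valid (n m : nat) (a : agent) : Prop :=
  match a with
  | Av i | AbJ i => in1 i n
  | Acl j => in1 j m
  | AbK => True
  end.

Definition agent_start (a : agent) : vtx :=
  match a with Av i => VA i | Acl j => VD j | AbJ i => VJ i | AbK => VK end.

Definition agent_goal (a : agent) : vtx :=
  match a with Av i => VA i | Acl j => VI j | AbJ i => VJ i | AbK => VK end.

Definition Iphi (n m : nat) (cl : nat -> nat -> lit) : lamapf :=
  {| V := vtx; vvalid := vtx_valid n m; posx := vx n m cl; posy := vy n m cl;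
     adj := vtx_adj n m; Ag := agent; avalid := agent_valid n m;
     rad := INR m; start := agent_start; goal := agent_goal |}.

(* Main.v *)
Require Import Defs.
From Stdlib Require Import Reals.
From Stdlib Require Import Lra Lia Arith List Psatz.
Open Scope R_scope.

Section Gen.
Variables (n m : nat) (cl : nat -> nat -> lit).
Definition cfg := agent -> vtx.
Definition valid a := agent_valid n m a.
Definition eqv (c d : cfg) := forall a, valid a -> c a = d a.
Definition stepok (c d : cfg) :=
  transition (Iphi n m cl) c d /\ ~ edge_conflict (Iphi n m cl) c d.
Definition okc (c : cfg) := is_config (Iphi n m cl) c /\ ~ vertex_conflict (Iphi n m cl) c.

Inductive reach : cfg -> cfg -> Prop :=
| Rrefl c d : okc c -> eqv c d -> reach c d
| Rstep c c' d : okc c -> stepok c c' -> reach c' d -> reach c d.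

Lemma eqv_sym c d : eqv c d -> eqv d c.
Proof. intros H a Ha; symmetry; auto. Qed.
Lemma eqv_trans c d e : eqv c d -> eqv d e -> eqv c e.
Proof. intros H1 H2 a Ha; rewrite H1; auto. Qed.

Lemma okc_eqv c d : okc c -> eqv c d -> okc d.
Proof.
  intros [[H1 H2] H3] E; split; [split|].
  - intros a Ha; simpl in *; rewrite <- E by auto; auto.
  - intros a b Ha Hb Hab; simpl in *; rewrite <- !E by auto; auto.
  - intros (a & b & Ha & Hb & Hab & Hd); apply H3; exists a, b; simpl in *.
    rewrite !E by auto; auto.
Qed.

Lemma stepok_eqv c c' d d' : stepok c c' -> eqv c d -> eqv c' d' -> stepok d d'.
Proof.
  intros [[a [Ha1 [Ha2 Ha3]]] Hn] E E'; split.
  - exists a; split; [auto|split].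
    + simpl in *; rewrite <- E, <- E' by auto; auto.
    + intros b Hb Hba; simpl in *; rewrite <- E, <- E' by auto; auto.
  - intros (a' & b & [Hm1 [Hm2 Hm3]] & Hb & Hba & Hns); apply Hn.
    exists a', b; simpl in *; split; [split; [auto|split]|].
    + rewrite E, E' by auto; auto.
    + intros b' Hb' Hb'a; rewrite E, E' by auto; auto.
    + split; [auto|split; [auto|]]. rewrite E, E', E by auto; auto.
Qed.

Lemma near_sym (w u v : vtx) :
  near_segment (Iphi n m cl) w u v -> near_segment (Iphi n m cl) w v u.
Proof.
  intros [t [Ht Hd]]; exists (1 - t); split; [lra|].
  simpl in *.
  replace (vx n m cl v + (1 - t) * (vx n m cl u - vx n m cl v)) with
      (vx n m cl u + t * (vx n m cl v - vx n m cl u)) by ring.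
  replace (vy n m cl v + (1 - t) * (vy n m cl u - vy n m cl v)) with
      (vy n m cl u + t * (vy n m cl v - vy n m cl u)) by ring.
  auto.
Qed.

Lemma stepok_sym c d : stepok c d -> stepok d c.
Proof.
  intros [[a [Ha1 [Ha2 Ha3]]] Hn]; split.
  - exists a; split; [auto|split].
    + simpl in *. destruct Ha2; [right|left]; auto.
    + intros b Hb Hba; symmetry; auto.
  - intros (a' & b & [Hm1 [Hm2 Hm3]] & Hb & Hba & Hns); apply Hn.
    exists a', b; split; [split; [auto|split]|].
    + simpl in *; destruct Hm2; [right|left]; auto.
    + intros b' Hb' Hb'a; symmetry; auto.
    + split; [auto|split; [auto|]].
      simpl in *. pose proof (Hm3 b Hb Hba) as E. unfold near_segment in *. simpl in *. rewrite E. apply (near_sym (d b) (d a') (c a')); auto.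
Qed.

Lemma reach_okl c d : reach c d -> okc c.
Proof. destruct 1; auto. Qed.

Lemma reach_okr c d : reach c d -> okc d.
Proof. induction 1; auto. eapply okc_eqv; eauto. Qed.

Lemma reach_eqv_r c d e : reach c d -> eqv d e -> reach c e.
Proof.
  induction 1; intros.
  - apply Rrefl; auto. eapply eqv_trans; eauto.
  - eapply Rstep; eauto.
Qed.

Lemma reach_eqv_l c d e : reach c d -> eqv c e -> reach e d.
Proof.
  destruct 1; intros.
  - apply Rrefl. eapply okc_eqv; eauto. eapply eqv_trans; [apply eqv_sym|]; eauto.
  - eapply Rstep with (c' := c'). eapply okc_eqv; eauto.
    eapply stepok_eqv; eauto. intros a _; auto. auto.
Qed.

Lemma reach_trans c d e : reach c d -> reach d e -> reach c e.
Proof.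
  induction 1; intros.
  - eapply reach_eqv_l; eauto. apply eqv_sym; auto.
  - eapply Rstep; eauto.
Qed.

Lemma reach_sym c d : reach c d -> reach d c.
Proof.
  induction 1.
  - apply Rrefl. eapply okc_eqv; eauto. apply eqv_sym; auto.
  - eapply reach_trans; [exact IHreach|].
    eapply Rstep. eapply reach_okl; eauto. apply stepok_sym; eauto.
    apply Rrefl; auto. intros a _; auto.
Qed.

Lemma reach_chain (f : nat -> cfg) (N : nat) :
  (forall p, (p < N)%nat -> stepok (f p) (f (S p))) ->
  (forall p, (p <= N)%nat -> okc (f p)) ->
  reach (f 0%nat) (f N).
Proof.
  intros Hs Ho.
  assert (forall k, (k <= N)%nat -> reach (f (N - k)%nat) (f N)).
  { induction k; intros.
    - rewrite Nat.sub_0_r. apply Rrefl; auto. intros a _; auto.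
    - eapply Rstep; [apply Ho; lia| |].
      + replace (S (N - S k)) with (N - k)%nat by lia. apply Hs. lia.
      + replace (S (N - S k)) with (N - k)%nat by lia. apply IHk. lia. }
  replace 0%nat with (N - N)%nat by lia. apply H; lia.
Qed.

Lemma reach_sol c d : reach c d ->
  exists T (s : nat -> cfg), s 0%nat = c /\ eqv (s T) d /\
    (forall t, (t <= T)%nat -> okc (s t)) /\
    (forall t, (t < T)%nat -> stepok (s t) (s (S t))).
Proof.
  induction 1.
  - exists 0%nat, (fun _ => c). split; [auto|split; [auto|split]].
    + intros; auto.
    + intros; lia.
  - destruct IHreach as (T & s & Hs0 & HT & Ho & Hs).
    exists (S T), (fun t => match t with O => c | S t' => s t' end).
    split; [auto|split; [auto|split]].
    + intros [|t] Ht; auto. apply Ho; lia.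
    + intros [|t] Ht. rewrite Hs0; auto. apply Hs; lia.
Qed.

End Gen.


Definition agent_eq (a b : agent) : {a = b} + {a <> b}.
Proof. decide equality; apply Nat.eq_dec. Defined.

Section Geo.
Variables (n m : nat) (cl : nat -> nat -> lit).
Hypothesis Hn : (1 <= n)%nat.
Hypothesis Hm : (1 <= m)%nat.
Hypothesis Hcl : forall j k, in1 j m -> (k < 3)%nat -> in1 (lvar (cl j k)) n.

Local Notation M := (INR m).
Local Notation N := (INR n).
Definition X v := vx n m cl v.
Definition Y v := vy n m cl v.

Lemma HM1 : 1 <= M.
Proof. replace 1 with (INR 1) by reflexivity. apply le_INR; lia. Qed.
Lemma HN1 : 1 <= N.
Proof. unfold N. replace 1 with (INR 1) by reflexivity. apply le_INR; lia. Qed.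

Lemma in1R i k : in1 i k -> 1 <= INR i /\ INR i <= INR k.
Proof. intros [H1 H2]; split. replace 1 with (INR 1) by reflexivity. apply le_INR; lia. apply le_INR; lia. Qed.

Ltac base := pose proof HM1; pose proof HN1;
  assert (M^2 >= M) by nra; assert (M*N >= M) by nra; assert (M*N >= N) by nra;
  assert (M^2*N >= M*N) by nra; assert (M^2*N >= M^2) by nra.

Ltac idx i k := let H := fresh in pose proof (in1R i k) as H;
  let a := fresh in let b := fresh in
  destruct H as [a b]; [auto|];
  assert (M * INR i >= M) by nra; assert (M * INR i <= M * INR k) by nra.

Definition sepxy x y x' y' := y + 2*M <= y' \/ y' + 2*M <= y \/ x + 2*M <= x' \/ x' + 2*M <= x.
Definition sepv u v := sepxy (X u) (Y u) (X v) (Y v).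
Definition segfar w u v := forall t, 0 <= t <= 1 ->
  sepxy (X w) (Y w) (X u + t * (X v - X u)) (Y u + t * (Y v - Y u)).

Lemma sepxy_dist x y x' y' : sepxy x y x' y' -> ~ dist2 x y x' y' < 2 * M.
Proof.
  pose proof HM1.
  intros Hs Hd. unfold dist2 in Hd.
  assert (Hk : (2*M)^2 <= (x - x')^2 + (y - y')^2).
  { clear Hd. pose proof (pow2_ge_0 (x - x')). pose proof (pow2_ge_0 (y - y')).
    unfold sepxy in Hs. destruct Hs as [Hs|[Hs|[Hs|Hs]]].
    - assert ((2*M)^2 <= (y - y')^2) by nra. lra.
    - assert ((2*M)^2 <= (y - y')^2) by nra. lra.
    - assert ((2*M)^2 <= (x - x')^2) by nra. lra.
    - assert ((2*M)^2 <= (x - x')^2) by nra. lra. }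
  apply sqrt_le_1_alt in Hk. rewrite sqrt_pow2 in Hk by lra. lra.
Qed.

Lemma sepv_sym u v : sepv u v -> sepv v u.
Proof. unfold sepv, sepxy; tauto. Qed.

Lemma sepv_neq u v : sepv u v -> u <> v.
Proof. pose proof HM1. intros Hs ->. unfold sepv, sepxy in Hs. lra. Qed.

Lemma adj_irrefl u : ~ vtx_adj n m u u.
Proof.
  unfold vtx_adj, base_edge.
  intros H; destruct H as [H|H];
  repeat match goal with
  | H : _ \/ _ |- _ => destruct H
  | H : _ /\ _ |- _ => destruct H
  | H : exists _, _ |- _ => destruct H
  end; subst; try discriminate;
  match goal with H : _ = _ |- _ => injection H; lia end.
Qed.

Lemma step_ok (c c' : cfg) a :
  valid n m a -> vtx_adj n m (c a) (c' a) ->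
  (forall b, valid n m b -> b <> a -> c' b = c b) ->
  (forall b, valid n m b -> b <> a -> segfar (c b) (c a) (c' a)) ->
  stepok n m cl c c'.
Proof.
  intros Ha Hadj Hst Hfar; split.
  - exists a; split; [auto|split; auto].
  - intros (a' & b & [Hm1 [Hm2 Hm3]] & Hb & Hba & Hns).
    assert (a' = a).
    { destruct (agent_eq a' a) as [e|ne]; auto. simpl in Hm2. rewrite Hst in Hm2 by auto.
      exfalso; eapply adj_irrefl; eauto. }
    subst a'. destruct Hns as [t [Ht Hd]].
    eapply sepxy_dist; [|exact Hd]. apply Hfar; auto.
Qed.

Lemma good_ok (c : cfg) :
  (forall a, valid n m a -> vtx_valid n m (c a)) ->
  (forall a b, valid n m a -> valid n m b -> a <> b -> sepv (c a) (c b)) ->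
  okc n m cl c.
Proof.
  intros Hv Hs; split; [split|].
  - intros a Ha; apply Hv; auto.
  - intros a b Ha Hb Hab; apply sepv_neq; apply Hs; auto.
  - intros (a & b & Ha & Hb & Hab & Hd). eapply sepxy_dist; [|exact Hd]. apply Hs; auto.
Qed.

Definition col v := match v with
  | VA i | VB i | VC i | VL i => i
  | VF j k => lvar (cl j k)
  | _ => 0%nat end.

Lemma X_col v : X v = Pc m * INR (col v).
Proof. destruct v; unfold X; simpl; try ring. Qed.

Lemma colx c1 c2 : c1 <> c2 ->
  Pc m * INR c1 + 2 * M <= Pc m * INR c2 \/ Pc m * INR c2 + 2 * M <= Pc m * INR c1.
Proof.
  intros H. pose proof HM1. unfold Pc.
  destruct (Nat.lt_total c1 c2) as [H1|[H1|H1]]; [|lia|].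
  - assert (INR (S c1) <= INR c2) by (apply le_INR; lia). rewrite S_INR in H2.
    left. nra.
  - assert (INR (S c2) <= INR c1) by (apply le_INR; lia). rewrite S_INR in H2.
    right. nra.
Qed.

Lemma sep_col u v : col u <> col v -> sepv u v.
Proof.
  intros H. unfold sepv, sepxy. rewrite !X_col. destruct (colx _ _ H); tauto.
Qed.

Lemma sep_yv u v : Y u + 2*M <= Y v \/ Y v + 2*M <= Y u -> sepv u v.
Proof. unfold sepv, sepxy; tauto. Qed.

Lemma seg_col w u v : col u = col v -> col w <> col u -> segfar w u v.
Proof.
  intros H1 H2 t Ht. unfold sepxy. rewrite !X_col. rewrite H1 in *.
  replace (Pc m * INR (col v) + t * (Pc m * INR (col v) - Pc m * INR (col v)))
    with (Pc m * INR (col v)) by ring.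
  destruct (colx _ _ H2); tauto.
Qed.

Lemma seg_y_above w u v : Y u + 2*M <= Y w -> Y v + 2*M <= Y w -> segfar w u v.
Proof. intros H1 H2 t Ht. unfold sepxy. right; left. nra. Qed.
Lemma seg_y_below w u v : Y w + 2*M <= Y u -> Y w + 2*M <= Y v -> segfar w u v.
Proof. intros H1 H2 t Ht. unfold sepxy. left. nra. Qed.
Lemma seg_x_above w u v : X u + 2*M <= X w -> X v + 2*M <= X w -> segfar w u v.
Proof. intros H1 H2 t Ht. unfold sepxy. right; right; right. nra. Qed.
Lemma seg_x_below w u v : X w + 2*M <= X u -> X w + 2*M <= X v -> segfar w u v.
Proof. intros H1 H2 t Ht. unfold sepxy. right; right; left. nra. Qed.

Lemma diag_lo x1 y0 y1 xw yw t : 0 <= t <= 1 -> 0 < x1 -> y1 < y0 ->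
  (yw + 2*M - y1) * x1 <= (x1 - xw - 2*M) * (y0 - y1) ->
  yw + 2*M <= y1 + t * (y0 - y1) \/ xw + 2*M <= x1 - t * x1.
Proof.
  intros Ht Hx Hy Hc.
  destruct (Rle_lt_dec (yw + 2*M) (y1 + t * (y0 - y1))) as [A|A]; [left; auto|right].
  destruct (Rle_lt_dec (xw + 2*M) (x1 - t * x1)) as [B|B]; [auto|exfalso].
  assert (t * (y0 - y1) * x1 < (yw + 2*M - y1) * x1) by (apply Rmult_lt_compat_r; lra).
  assert ((x1 - xw - 2*M) * (y0 - y1) < t * x1 * (y0 - y1)) by (apply Rmult_lt_compat_r; lra).
  nra.
Qed.

Lemma diag_hi x1 y0 y1 xw yw t : 0 <= t <= 1 -> 0 < x1 -> y0 < y1 ->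
  (y1 - (yw - 2*M)) * x1 <= (x1 - xw - 2*M) * (y1 - y0) ->
  y1 + t * (y0 - y1) + 2*M <= yw \/ xw + 2*M <= x1 - t * x1.
Proof.
  intros Ht Hx Hy Hc.
  destruct (diag_lo x1 (-y0) (-y1) xw (-yw) t Ht Hx) as [A|A]; [lra| |lra|auto].
  replace (- yw + 2 * M - - y1) with (y1 - (yw - 2*M)) by ring.
  replace (- y0 - - y1) with (y1 - y0) by ring. auto.
Qed.

Lemma gapP a b : (a + 1 <= b)%nat -> Pc m * INR a + 2*M + 1 <= Pc m * INR b.
Proof.
  intros H. pose proof HM1. assert (INR (S a) <= INR b) by (apply le_INR; lia).
  rewrite S_INR in H1. unfold Pc. nra.
Qed.

Lemma PI_ge a k : in1 a k -> 2*M + 1 <= Pc m * INR a <= Pc m * INR k.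
Proof.
  intros H. pose proof HM1. destruct (in1R _ _ H). unfold Pc. split; nra.
Qed.

Definition Jc := 4*M^2*N + 2*M^2 + 2*M*N + 3*M - 2.
Lemma Y_J a : Y (VJ a) = Pc m * INR a + Jc.
Proof. unfold Y, Jc; simpl. ring. Qed.
Lemma Jc_pos : 2*M^2 + 3*M - 2 <= Jc.
Proof. base. unfold Jc. lra. Qed.

Definition chv q := if (q <? n)%nat then VJ (n - q) else if (q =? n)%nat then VK else VL (q - n).

Lemma chv_cases q : ((q < n)%nat /\ chv q = VJ (n - q)) \/ (q = n /\ chv q = VK) \/
  ((n < q)%nat /\ chv q = VL (q - n)).
Proof.
  unfold chv. destruct (Nat.ltb_spec q n); [left; auto|].
  destruct (Nat.eqb_spec q n); [right; left; auto|right; right; split; auto; lia].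
Qed.

Lemma chv_valid q : (q <= 2*n)%nat -> vtx_valid n m (chv q).
Proof.
  intros H. destruct (chv_cases q) as [[H1 ->]|[[H1 ->]|[H1 ->]]]; simpl; unfold in1; auto; lia.
Qed.

Lemma chv_Y q : (q <= 2*n)%nat -> 0 <= Y (chv q) <= Pc m * N + Jc.
Proof.
  intros H. pose proof Jc_pos. pose proof HM1.
  destruct (chv_cases q) as [[Q1 ->]|[[Q1 ->]|[Q1 ->]]].
  - rewrite Y_J. assert (Hi : in1 (n - q) n) by (unfold in1; lia).
    destruct (PI_ge _ _ Hi). nra.
  - unfold Y; simpl. destruct (PI_ge n n) as [A B]; [unfold in1; lia|]. nra.
  - unfold Y; simpl. destruct (PI_ge n n) as [A B]; [unfold in1; lia|]. nra.
Qed.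

Lemma chv_Y0 q : (n <= q)%nat -> Y (chv q) = 0.
Proof.
  intros H. destruct (chv_cases q) as [[H1 ->]|[[H1 ->]|[H1 ->]]]; [lia| |]; reflexivity.
Qed.

Lemma chain_sep q q' : (q <= 2*n)%nat -> (q' <= 2*n)%nat -> q <> q' -> sepv (chv q) (chv q').
Proof.
  intros H H' Hq. pose proof Jc_pos. pose proof HM1.
  destruct (chv_cases q) as [[Q1 E1]|[[Q1 E1]|[Q1 E1]]];
  destruct (chv_cases q') as [[Q2 E2]|[[Q2 E2]|[Q2 E2]]]; rewrite E1, E2; try lia.
  - apply sep_yv. rewrite !Y_J. assert (Hd : (n - q <> n - q')%nat) by lia.
    destruct (colx _ _ Hd); [left|right]; lra.
  - apply sep_yv. rewrite !Y_J. right. unfold Y; simpl.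
    destruct (PI_ge (n - q) n); [unfold in1; lia|]. nra.
  - apply sep_col; simpl; lia.
  - apply sep_yv. rewrite !Y_J. left. unfold Y; simpl.
    destruct (PI_ge (n - q') n); [unfold in1; lia|]. nra.
  - apply sep_col; simpl; lia.
  - apply sep_col; simpl; lia.
  - apply sep_col; simpl; lia.
  - apply sep_col; simpl; lia.
Qed.

Lemma chain_adj q : (q < 2*n)%nat -> vtx_adj n m (chv q) (chv (S q)).
Proof.
  intros H. unfold vtx_adj, base_edge.
  destruct (chv_cases q) as [[Q1 E1]|[[Q1 E1]|[Q1 E1]]];
  destruct (chv_cases (S q)) as [[Q2 E2]|[[Q2 E2]|[Q2 E2]]]; rewrite E1, E2; try lia.
  - right. right; right; left. exists (n - S q)%nat. split; [lia|].
    left. split; f_equal; lia.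
  - left. right; right; right; left. replace (n - q)%nat with 1%nat by lia. auto.
  - left. right; right; right; right. replace (S q - n)%nat with 1%nat by lia. subst; auto.
  - left. right; right; left. exists (q - n)%nat. split; [lia|]. right. split; f_equal; lia.
Qed.

Lemma basefacts : 1 <= M /\ 1 <= N /\ M^2 >= M /\ M*N >= M /\ M*N >= N /\ M^2*N >= M*N /\ M^2*N >= M^2.
Proof.
  pose proof HM1; pose proof HN1.
  assert (M^2 >= M) by nra. assert (M*N >= M) by nra. assert (M*N >= N) by nra.
  assert (M^2*N >= M*N) by (assert (0 <= (M^2 - M) * N) by (apply Rmult_le_pos; nra); nra).
  assert (M^2*N >= M^2) by (assert (0 <= M^2 * (N - 1)) by (apply Rmult_le_pos; nra); nra).
  tauto.
Qed.

Ltac fin := pose proof basefacts; unfold X, Y, Jc in *; simpl in *; unfold Pc in *; lra.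

Lemma chain_seg p q : (p <= 2*n)%nat -> (q < 2*n)%nat -> p <> q -> p <> S q ->
  segfar (chv p) (chv q) (chv (S q)).
Proof.
  intros Hp Hq H1 H2. pose proof Jc_pos. pose proof HM1.
  destruct (chv_cases q) as [[A1 E1]|[[A1 E1]|[A1 E1]]];
  destruct (chv_cases (S q)) as [[A2 E2]|[[A2 E2]|[A2 E2]]]; try lia;
  destruct (chv_cases p) as [[A3 E3]|[[A3 E3]|[A3 E3]]]; rewrite E1, E2, E3; try lia.
  - destruct (Nat.lt_total p q) as [B|[B|B]]; [|lia|].
    + pose proof (gapP (n - q) (n - p) ltac:(lia)).
      pose proof (gapP (n - S q) (n - p) ltac:(lia)).
      apply seg_y_above; fin.
    + pose proof (gapP (n - p) (n - q) ltac:(lia)).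
      pose proof (gapP (n - p) (n - S q) ltac:(lia)).
      apply seg_y_below; fin.
  - destruct (PI_ge (n - q) n); [unfold in1; lia|].
    destruct (PI_ge (n - S q) n); [unfold in1; lia|].
    apply seg_y_below; fin.
  - apply seg_col; simpl; lia.
  - pose proof (gapP (n - q) (n - p) ltac:(lia)).
    destruct (PI_ge (n - p) n); [unfold in1; lia|].
    apply seg_y_above; fin.
  - apply seg_col; simpl; lia.
  - destruct (PI_ge (n - p) n); [unfold in1; lia|].
    apply seg_y_above; fin.
  - destruct (PI_ge (p - n) n); [unfold in1; lia|].
    pose proof (gapP (S q - n) (p - n) ltac:(lia)).
    apply seg_x_above; fin.
  - destruct (PI_ge (n - p) n); [unfold in1; lia|].
    apply seg_y_above; fin.
  - destruct (PI_ge (q - n) n); [unfold in1; lia|].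
    destruct (PI_ge (S q - n) n); [unfold in1; lia|].
    apply seg_x_below; fin.
  - destruct (Nat.lt_total p q) as [B|[B|B]]; [|lia|].
    + pose proof (gapP (p - n) (q - n) ltac:(lia)).
      pose proof (gapP (p - n) (S q - n) ltac:(lia)).
      apply seg_x_below; fin.
    + pose proof (gapP (q - n) (p - n) ltac:(lia)).
      pose proof (gapP (S q - n) (p - n) ltac:(lia)).
      apply seg_x_above; fin.
Qed.

Variable asg : nat -> bool.
Hypothesis Hsat : forall j, in1 j m -> exists k, (k < 3)%nat /\ lit_true asg (cl j k).

Definition litb j k := Bool.eqb (asg (lvar (cl j k))) (lpos (cl j k)).
Definition ch j : nat := if litb j 0 then 0%nat else if litb j 1 then 1%nat else 2%nat.

Lemma ch_ok j : in1 j m -> (ch j < 3)%nat /\ asg (lvar (cl j (ch j))) = lpos (cl j (ch j)).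
Proof.
  intros Hj. destruct (Hsat j Hj) as [k [Hk Ht]]. unfold lit_true in Ht.
  unfold ch. destruct (litb j 0) eqn:E0.
  - unfold litb in E0. apply Bool.eqb_prop in E0. split; auto; lia.
  - destruct (litb j 1) eqn:E1.
    + unfold litb in E1. apply Bool.eqb_prop in E1. split; auto; lia.
    + split; [lia|]. unfold litb in *.
      destruct k as [|[|[|k]]]; try lia.
      * rewrite Ht in E0. rewrite Bool.eqb_reflx in E0. discriminate.
      * rewrite Ht in E1. rewrite Bool.eqb_reflx in E1. discriminate.
      * exact Ht.
Qed.

Definition Fj j := VF j (ch j).
Definition tgt i := if asg i then VB i else VC i.
Definition cf (hi : bool) j := if hi then VI j else VD j.

Definition mk (vp cp : nat -> vtx) (bp : nat -> nat) : cfg :=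
  fun a => match a with
  | Av i => vp i | Acl j => cp j | AbJ i => chv (bp (n - i)%nat) | AbK => chv (bp n) end.

Lemma good_mk vp cp bp :
 (forall i, in1 i n -> vtx_valid n m (vp i) /\ col (vp i) = i) ->
 (forall j, in1 j m -> vtx_valid n m (cp j)) ->
 (forall b, (b <= n)%nat -> (bp b <= 2*n)%nat) ->
 (forall b b', (b <= n)%nat -> (b' <= n)%nat -> b <> b' -> bp b <> bp b') ->
 (forall j j', in1 j m -> in1 j' m -> j <> j' -> sepv (cp j) (cp j')) ->
 (forall i b, in1 i n -> (b <= n)%nat -> sepv (vp i) (chv (bp b))) ->
 (forall i j, in1 i n -> in1 j m -> sepv (vp i) (cp j)) ->
 (forall j b, in1 j m -> (b <= n)%nat -> sepv (cp j) (chv (bp b))) ->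
 okc n m cl (mk vp cp bp).
Proof.
  intros Hv Hc Hb Hbi Hcc Hvb Hvc Hcb. apply good_ok.
  - intros [i|j|i|] Ha; simpl in *; unfold valid in Ha; simpl in Ha.
    + apply Hv; auto.
    + apply Hc; auto.
    + apply chv_valid. apply Hb. lia.
    + apply chv_valid. apply Hb. lia.
  - intros [i|j|i|] [i'|j'|i'|] Ha Hb' Hab; unfold valid in *; simpl in *;
    try solve [ first [apply Hvb | apply Hvc | apply Hcb]; auto; unfold in1 in *; lia
              | apply sepv_sym; first [apply Hvb | apply Hvc | apply Hcb]; auto; unfold in1 in *; lia ].
    + apply sep_col. destruct (Hv i Ha) as [_ E1], (Hv i' Hb') as [_ E2].
      rewrite E1, E2; intro; subst; congruence.
    + apply Hcc; auto; intro; subst; congruence.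
    + assert (i <> i') by congruence.
      apply chain_sep; try (apply Hb; unfold in1 in *; lia). apply Hbi; unfold in1 in *; lia.
    + apply chain_sep; try (apply Hb; unfold in1 in *; lia). apply Hbi; unfold in1 in *; lia.
    + apply chain_sep; try (apply Hb; unfold in1 in *; lia). apply Hbi; unfold in1 in *; lia.
    + exfalso; apply Hab; reflexivity.
Qed.

Lemma tgt_vc i : in1 i n -> vtx_valid n m (tgt i) /\ col (tgt i) = i.
Proof. intros H; unfold tgt; destruct (asg i); simpl; auto. Qed.
Lemma A_vc i : in1 i n -> vtx_valid n m (VA i) /\ col (VA i) = i.
Proof. intros H; simpl; auto. Qed.
Lemma cf_valid hi j : in1 j m -> vtx_valid n m (cf hi j).
Proof. intros H; unfold cf; destruct hi; simpl; auto. Qed.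
Lemma cf_col hi j : col (cf hi j) = 0%nat.
Proof. unfold cf; destruct hi; reflexivity. Qed.
Lemma chv_col0 q : (q <= n)%nat -> col (chv q) = 0%nat.
Proof. intros H. destruct (chv_cases q) as [[Q1 ->]|[[Q1 ->]|[Q1 ->]]]; auto; lia. Qed.

Lemma sep_cf_cf hi j j' : j <> j' -> sepv (cf hi j) (cf hi j').
Proof.
  intros H. apply sep_yv. destruct (colx _ _ H); unfold cf; destruct hi; [left|left|right|right];
  unfold Y; simpl; lra.
Qed.

Lemma tgt_Y i : 2*M^2 + M <= Y (tgt i).
Proof. pose proof basefacts. unfold tgt; destruct (asg i); unfold Y; simpl; lra. Qed.

Lemma sep_tgt_chv i q : in1 i n -> (q <= 2*n)%nat -> sepv (tgt i) (chv q).
Proof.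
  intros Hi Hq. destruct (tgt_vc i Hi) as [_ Ec].
  destruct (Nat.le_gt_cases q n).
  - apply sep_col. rewrite chv_col0, Ec by auto. unfold in1 in Hi; lia.
  - apply sep_yv. right. rewrite chv_Y0 by lia. pose proof (tgt_Y i). pose proof basefacts. lra.
Qed.

Lemma cf_Y hi j : in1 j m -> Pc m * N + Jc + 2*M <= Y (cf hi j).
Proof.
  intros Hj. destruct (PI_ge j m Hj). pose proof basefacts.
  unfold cf; destruct hi; fin.
Qed.

Lemma sep_cf_chv hi j q : in1 j m -> (q <= 2*n)%nat -> sepv (cf hi j) (chv q).
Proof.
  intros Hj Hq. apply sep_yv. right. pose proof (chv_Y q Hq). pose proof (cf_Y hi j Hj). lra.
Qed.

Lemma seg_tgt_chain i q : in1 i n -> (q < 2*n)%nat -> segfar (tgt i) (chv q) (chv (S q)).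
Proof.
  intros Hi Hq. destruct (tgt_vc i Hi) as [_ Ec].
  destruct (Nat.le_gt_cases (S q) n).
  - apply seg_col; rewrite ?chv_col0, ?Ec by lia; auto. unfold in1 in Hi; lia.
  - pose proof (tgt_Y i). pose proof basefacts.
    apply seg_y_above; rewrite chv_Y0 by lia; lra.
Qed.

Lemma seg_cf_chain hi j q : in1 j m -> (q < 2*n)%nat -> segfar (cf hi j) (chv q) (chv (S q)).
Proof.
  intros Hj Hq. pose proof (cf_Y hi j Hj).
  pose proof (chv_Y q ltac:(lia)). pose proof (chv_Y (S q) ltac:(lia)).
  apply seg_y_above; lra.
Qed.

Definition vp1 p i := if (i <=? p)%nat then tgt i else VA i.
Definition P1 hi p := mk (vp1 p) (cf hi) (fun b => b).

Lemma vp1_vc p i : in1 i n -> vtx_valid n m (vp1 p i) /\ col (vp1 p i) = i.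
Proof. intros H; unfold vp1; destruct (i <=? p)%nat; [apply tgt_vc|apply A_vc]; auto. Qed.

Lemma ok_P1 hi p : okc n m cl (P1 hi p).
Proof.
  apply good_mk.
  - apply vp1_vc.
  - apply cf_valid.
  - intros; lia.
  - auto.
  - intros; apply sep_cf_cf; auto.
  - intros i b Hi Hb. apply sep_col. rewrite chv_col0 by auto.
    rewrite (proj2 (vp1_vc p i Hi)). unfold in1 in Hi; lia.
  - intros i j Hi Hj. apply sep_col. rewrite cf_col.
    rewrite (proj2 (vp1_vc p i Hi)). unfold in1 in Hi; lia.
  - intros j b Hj Hb. apply sep_cf_chv; auto; lia.
Qed.

Lemma step_P1 hi p : (p < n)%nat -> stepok n m cl (P1 hi p) (P1 hi (S p)).
Proof.
  intros Hp. apply step_ok with (a := Av (S p)).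
  - unfold valid; simpl; unfold in1; lia.
  - simpl. unfold vp1. rewrite (proj2 (Nat.leb_gt (S p) p)) by lia.
    rewrite (proj2 (Nat.leb_le (S p) (S p))) by lia.
    unfold tgt; destruct (asg (S p)); left; left; exists (S p); split; unfold in1; auto; lia.
  - intros [i|j|i|] Hb Hba; simpl; auto. unfold vp1.
    assert (i <> S p) by congruence.
    destruct (Nat.leb_spec i p); destruct (Nat.leb_spec i (S p)); auto; lia.
  - assert (Ec : forall p', col (vp1 p' (S p)) = S p) by (intros; apply vp1_vc; unfold in1; lia).
    intros [i|j|i|] Hb Hba; unfold valid in Hb; simpl in Hb; simpl; apply seg_col; rewrite ?Ec; auto.
    + rewrite (proj2 (vp1_vc p i Hb)). congruence.
    + rewrite cf_col. lia.
    + rewrite chv_col0 by lia. lia.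
    + rewrite chv_col0 by lia. lia.
Qed.

Lemma reach_P1 hi : reach n m cl (P1 hi 0) (P1 hi n).
Proof.
  apply reach_chain with (f := P1 hi).
  - intros; apply step_P1; auto.
  - intros; apply ok_P1.
Qed.

Definition bpos k s b := if (n - k <? b)%nat then (b + n)%nat
  else if (b =? n - k)%nat then (b + s)%nat else b.
Definition P2 hi k s := mk tgt (cf hi) (bpos k s).
Definition bag k := match k with O => AbK | S _ => AbJ k end.

Lemma bpos_le k s b : (s <= n)%nat -> (b <= n)%nat -> (bpos k s b <= 2*n)%nat.
Proof. intros. unfold bpos. destruct (Nat.ltb_spec (n - k) b); [lia|]. destruct (Nat.eqb_spec b (n-k)); lia. Qed.

Lemma bpos_inj k s b b' : (k <= n)%nat -> (s <= n)%nat -> (b <= n)%nat -> (b' <= n)%nat -> b <> b' -> bpos k s b <> bpos k s b'.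
Proof.
  intros. unfold bpos.
  destruct (Nat.ltb_spec (n - k) b); destruct (Nat.ltb_spec (n - k) b');
  try destruct (Nat.eqb_spec b (n-k)); try destruct (Nat.eqb_spec b' (n-k)); lia.
Qed.

Lemma ok_P2 hi k s : (k <= n)%nat -> (s <= n)%nat -> okc n m cl (P2 hi k s).
Proof.
  intros Hk Hs. apply good_mk.
  - apply tgt_vc.
  - apply cf_valid.
  - intros; apply bpos_le; auto.
  - intros; apply bpos_inj; auto.
  - intros; apply sep_cf_cf; auto.
  - intros i b Hi Hb. apply sep_tgt_chv; auto. apply bpos_le; auto.
  - intros i j Hi Hj. apply sep_col. rewrite cf_col.
    rewrite (proj2 (tgt_vc i Hi)). unfold in1 in Hi; lia.
  - intros j b Hj Hb. apply sep_cf_chv; auto. apply bpos_le; auto.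
Qed.

Lemma mk_bag vp cp bp k : (k <= n)%nat -> mk vp cp bp (bag k) = chv (bp (n - k)%nat).
Proof. intros. destruct k; simpl; auto. rewrite Nat.sub_0_r. auto. Qed.

Definition bidx a := match a with AbJ i => (n - i)%nat | _ => n end.
Lemma mk_b vp cp bp a : (forall i, a <> Av i) -> (forall j, a <> Acl j) -> mk vp cp bp a = chv (bp (bidx a)).
Proof. intros H1 H2. destruct a; simpl; auto; [exfalso; eapply H1|exfalso; eapply H2]; eauto. Qed.

Lemma step_P2 hi k s : (k <= n)%nat -> (s < n)%nat -> stepok n m cl (P2 hi k s) (P2 hi k (S s)).
Proof.
  intros Hk Hs.
  assert (Eq : forall s', bpos k s' (n - k) = (n - k + s')%nat).
  { intros. unfold bpos. rewrite (proj2 (Nat.ltb_ge _ _)) by lia. rewrite Nat.eqb_refl. auto. }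
  apply step_ok with (a := bag k).
  - destruct k; unfold valid; simpl; unfold in1; auto; lia.
  - unfold P2. rewrite !mk_bag by auto. rewrite !Eq. replace (n - k + S s)%nat with (S (n - k + s)) by lia.
    apply chain_adj; lia.
  - intros [i|j|i|] Hb Hba; simpl; auto.
    + unfold valid in Hb; simpl in Hb. unfold bpos.
      assert (i <> k) by (destruct k; [unfold in1 in Hb; lia|simpl in Hba; congruence]).
      destruct (Nat.ltb_spec (n - k) (n - i)); auto.
      destruct (Nat.eqb_spec (n - i) (n - k)); auto. unfold in1 in Hb; lia.
    + unfold bpos. assert (k <> 0%nat) by (destruct k; simpl in Hba; congruence).
      destruct (Nat.ltb_spec (n - k) n); auto.
      destruct (Nat.eqb_spec n (n - k)); auto. lia.
  - unfold P2. rewrite !mk_bag by auto. rewrite !Eq. replace (n - k + S s)%nat with (S (n - k + s)) by lia.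
    intros [i|j|i|] Hb Hba; unfold valid in Hb; simpl in Hb; simpl.
    + apply seg_tgt_chain; auto; lia.
    + apply seg_cf_chain; auto; lia.
    + assert (i <> k) by (destruct k; [unfold in1 in Hb; lia|simpl in Hba; congruence]).
      apply chain_seg; [apply bpos_le; unfold in1 in *; lia|lia| |];
      unfold bpos; destruct (Nat.ltb_spec (n - k) (n - i));
      try destruct (Nat.eqb_spec (n - i) (n - k)); unfold in1 in *; lia.
    + assert (k <> 0%nat) by (destruct k; simpl in Hba; congruence).
      apply chain_seg; [apply bpos_le; unfold in1 in *; lia|lia| |];
      unfold bpos; destruct (Nat.ltb_spec (n - k) n);
      try destruct (Nat.eqb_spec n (n - k)); unfold in1 in *; lia.
Qed.

Lemma reach_P2_stage hi k : (k <= n)%nat -> reach n m cl (P2 hi k 0) (P2 hi k n).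
Proof.
  intros Hk. apply reach_chain with (f := P2 hi k).
  - intros; apply step_P2; auto.
  - intros; apply ok_P2; auto.
Qed.

Lemma eqv_mk vp cp bp bp' : (forall b, (b <= n)%nat -> bp b = bp' b) ->
  eqv n m (mk vp cp bp) (mk vp cp bp').
Proof. intros H [i|j|i|] Ha; simpl; auto; rewrite H; auto; lia. Qed.

Lemma eqv_P2 hi k : (k < n)%nat -> eqv n m (P2 hi k n) (P2 hi (S k) 0).
Proof.
  intros Hk. apply eqv_mk. intros b Hb. unfold bpos.
  destruct (Nat.ltb_spec (n - k) b); destruct (Nat.ltb_spec (n - S k) b);
  try destruct (Nat.eqb_spec b (n - k)); try destruct (Nat.eqb_spec b (n - S k)); lia.
Qed.

Lemma reach_P2 hi : reach n m cl (P2 hi 0 0) (P2 hi n n).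
Proof.
  assert (forall k, (k <= n)%nat -> reach n m cl (P2 hi 0 0) (P2 hi k n)).
  { induction k; intros Hk.
    - apply reach_P2_stage; lia.
    - eapply reach_trans; [apply IHk; lia|].
      eapply reach_eqv_l; [apply reach_P2_stage; lia|]. apply eqv_sym. apply eqv_P2; lia. }
  apply H; lia.
Qed.

Lemma eqv_P1_P2 hi : eqv n m (P1 hi n) (P2 hi 0 0).
Proof.
  intros [i|j|i|] Ha; unfold valid in Ha; simpl in *; auto.
  - unfold vp1. rewrite (proj2 (Nat.leb_le i n)); auto. unfold in1 in Ha; lia.
  - unfold bpos. destruct (Nat.ltb_spec (n - 0) (n - i)); try destruct (Nat.eqb_spec (n - i) (n - 0)); f_equal; lia.
  - unfold bpos. destruct (Nat.ltb_spec (n - 0) n); try destruct (Nat.eqb_spec n (n - 0)); f_equal; lia.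
Qed.

Definition P3 cp := mk tgt cp (fun b => (b + n)%nat).

Lemma eqv_P2_P3 hi : eqv n m (P2 hi n n) (P3 (cf hi)).
Proof.
  apply eqv_mk. intros b Hb. unfold bpos.
  destruct (Nat.ltb_spec (n - n) b); try destruct (Nat.eqb_spec b (n - n)); lia.
Qed.

Lemma sep_chv_hi v q : (n <= q)%nat -> 2*M <= Y v -> sepv v (chv q).
Proof. intros Hq Hv. apply sep_yv. right. rewrite chv_Y0 by auto. lra. Qed.

Lemma ok_P3 cp :
  (forall j, in1 j m -> vtx_valid n m (cp j)) ->
  (forall j j', in1 j m -> in1 j' m -> j <> j' -> sepv (cp j) (cp j')) ->
  (forall i j, in1 i n -> in1 j m -> sepv (tgt i) (cp j)) ->
  (forall j, in1 j m -> 2*M <= Y (cp j)) ->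
  okc n m cl (P3 cp).
Proof.
  intros H1 H2 H3 H4. apply good_mk; auto.
  - apply tgt_vc.
  - intros; lia.
  - intros; lia.
  - intros i b Hi Hb. apply sep_tgt_chv; auto; lia.
  - intros j b Hj Hb. apply sep_chv_hi; auto; lia.
Qed.

Definition lvj j := lvar (cl j (ch j)).

Lemma F_facts j : in1 j m ->
  in1 (lvj j) n /\ col (Fj j) = lvj j /\ vtx_valid n m (Fj j) /\
  ((lpos (cl j (ch j)) = true /\ tgt (lvj j) = VB (lvj j) /\ Y (Fj j) = INR j + 2*M^2 + 2*M - 1) \/
   (lpos (cl j (ch j)) = false /\ tgt (lvj j) = VC (lvj j) /\
      Y (Fj j) = INR j + 4*M^2*N + 2*M^2 + 2*M*N + 3*M - 1)).
Proof.
  intros Hj. destruct (ch_ok j Hj) as [Hc Ha].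
  split; [apply Hcl; auto|]. split; [reflexivity|]. split; [simpl; auto|].
  unfold tgt, lvj, Fj, Y. simpl. rewrite Ha.
  destruct (lpos (cl j (ch j))); [left|right]; auto.
Qed.

Lemma X_F j : X (Fj j) = Pc m * INR (lvj j).
Proof. reflexivity. Qed.

Lemma sep_tgt_F i j : in1 i n -> in1 j m -> sepv (tgt i) (Fj j).
Proof.
  intros Hi Hj. destruct (F_facts j Hj) as (Hl & Hc & _ & Hs).
  destruct (Nat.eq_dec i (lvj j)) as [->|Hne].
  - apply sep_yv. destruct (in1R _ _ Hj). pose proof basefacts.
    destruct Hs as [(_ & -> & HY)|(_ & -> & HY)]; rewrite HY; [right|left]; unfold Y; simpl; lra.
  - apply sep_col. rewrite Hc, (proj2 (tgt_vc i Hi)). auto.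
Qed.

Ltac jfacts Hj := let H := fresh "JF" in let H' := fresh "JF" in
    pose proof (in1R _ _ Hj) as H; pose proof (PI_ge _ _ Hj) as H'; destruct H; destruct H'.

Lemma sepH_x j j' : in1 j m -> in1 j' m ->
  Y (VH j) + 2*M <= Y (VE j') /\ Y (VH j) + 2*M <= Y (VG j') /\
  Y (VH j) + 2*M <= Y (VD j') /\ Y (VH j) + 2*M <= Y (VI j').
Proof. intros Hj Hj'. jfacts Hj. jfacts Hj'. repeat split; fin. Qed.

Lemma sepD_x j j' : in1 j m -> in1 j' m ->
  Y (VE j') + 2*M <= Y (VD j) /\ Y (VG j') + 2*M <= Y (VD j).
Proof. intros Hj Hj'. jfacts Hj. jfacts Hj'. repeat split; fin. Qed.

Lemma sepHH j j' : j <> j' -> sepv (VH j) (VH j').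
Proof. intros H. apply sep_yv. destruct (colx _ _ H); unfold Y; simpl; lra. Qed.

Lemma Y_c_ge j : in1 j m ->
  2*M <= Y (VH j) /\ 2*M <= Y (VE j) /\ 2*M <= Y (VG j) /\ 2*M <= Y (VD j) /\ 2*M <= Y (VI j) /\
  2*M <= Y (Fj j).
Proof.
  intros Hj. jfacts Hj. destruct (F_facts j Hj) as (_ & _ & _ & [(_ & _ & HY)|(_ & _ & HY)]);
  rewrite HY; repeat split; fin.
Qed.

Definition st j s := match s with 0 => VD j | 1 => VE j | 2 => Fj j | 3 => VG j | _ => VH j end%nat.
Definition cpa j s j' := if (j' <? j)%nat then VH j' else if (j' =? j)%nat then st j s else VD j'.
Definition R3 j s := P3 (cpa j s).

Lemma st_valid j s : in1 j m -> vtx_valid n m (st j s).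
Proof.
  intros Hj. destruct s as [|[|[|[|s]]]]; simpl; auto. apply (F_facts j Hj).
Qed.

Lemma tgt_c0 i v : in1 i n -> col v = 0%nat -> sepv (tgt i) v.
Proof. intros Hi Hv. apply sep_col. rewrite Hv, (proj2 (tgt_vc i Hi)). unfold in1 in Hi; lia. Qed.

Lemma F_c0 j v : in1 j m -> col v = 0%nat -> sepv (Fj j) v.
Proof. intros Hj Hv. apply sep_col. destruct (F_facts j Hj) as (Hl & Hc & _). rewrite Hv, Hc. unfold in1 in Hl; lia. Qed.

Lemma ok_R3 j s : in1 j m -> okc n m cl (R3 j s).
Proof.
  intros Hj. apply ok_P3.
  - intros j' Hj'. unfold cpa. destruct (j' <? j)%nat; [simpl; auto|].
    destruct (Nat.eqb_spec j' j); [subst; apply st_valid; auto|simpl; auto].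
  - intros j1 j2 H1 H2 H12. unfold cpa.
    pose proof (sepH_x j1 j2 H1 H2). pose proof (sepH_x j2 j1 H2 H1).
    pose proof (sepH_x j j1 Hj H1). pose proof (sepH_x j1 j H1 Hj).
    pose proof (sepH_x j j2 Hj H2). pose proof (sepH_x j2 j H2 Hj).
    pose proof (sepD_x j1 j2 H1 H2). pose proof (sepD_x j2 j1 H2 H1).
    pose proof (sepD_x j j1 Hj H1). pose proof (sepD_x j1 j H1 Hj).
    pose proof (sepD_x j j2 Hj H2). pose proof (sepD_x j2 j H2 Hj).
    destruct (Nat.ltb_spec j1 j); destruct (Nat.ltb_spec j2 j);
    try destruct (Nat.eqb_spec j1 j); try destruct (Nat.eqb_spec j2 j); try lia; subst;
    try destruct s as [|[|[|[|s]]]]; simpl;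
    first [ solve [apply sepHH; lia] | solve [apply (sep_cf_cf false); lia] | solve [apply F_c0; auto]
          | solve [apply sepv_sym; apply F_c0; auto] | solve [apply sep_yv; lra] ].
  - intros i j' Hi Hj'. unfold cpa.
    destruct (j' <? j)%nat; [apply tgt_c0; auto|].
    destruct (Nat.eqb_spec j' j); [subst|apply tgt_c0; auto].
    destruct s as [|[|[|[|s]]]]; simpl; try solve [apply tgt_c0; auto]. apply sep_tgt_F; auto.
  - intros j' Hj'. unfold cpa. destruct (Y_c_ge j' Hj') as (A1 & A2 & A3 & A4 & A5 & A6).
    destruct (j' <? j)%nat; auto.
    destruct (Nat.eqb_spec j' j); [subst|auto].
    destruct s as [|[|[|[|s]]]]; simpl; auto.
Qed.

Lemma segd_lo w O F : X O = 0 -> Pc m <= X F <= Pc m * N -> X w + 2*M + 1 <= X F ->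
  Y F < Y O -> Y w + 2*M - Y F <= M -> M * (Pc m * N) <= Y O - Y F ->
  segfar w O F /\ segfar w F O.
Proof.
  intros HO HF Hw HY Ha Hc. pose proof HM1.
  assert (Cond : (Y w + 2*M - Y F) * X F <= (X F - X w - 2*M) * (Y O - Y F)).
  { assert ((Y w + 2*M - Y F) * X F <= M * X F) by (apply Rmult_le_compat_r; unfold Pc in HF; lra).
    assert (M * X F <= M * (Pc m * N)) by (apply Rmult_le_compat_l; lra).
    assert (1 * (Y O - Y F) <= (X F - X w - 2*M) * (Y O - Y F)) by (apply Rmult_le_compat_r; lra).
    lra. }
  assert (HXF : 0 < X F) by (unfold Pc in HF; lra).
  split; intros t Ht; unfold sepxy; rewrite HO.
  - destruct (diag_lo (X F) (Y O) (Y F) (X w) (Y w) (1 - t) ltac:(lra) HXF HY Cond);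
    [left|right; right; left]; lra.
  - destruct (diag_lo (X F) (Y O) (Y F) (X w) (Y w) t Ht HXF HY Cond);
    [left|right; right; left]; lra.
Qed.

Lemma segd_hi w O F : X O = 0 -> Pc m <= X F <= Pc m * N -> X w + 2*M + 1 <= X F ->
  Y O < Y F -> Y F - Y w + 2*M <= M -> M * (Pc m * N) <= Y F - Y O ->
  segfar w O F /\ segfar w F O.
Proof.
  intros HO HF Hw HY Ha Hc. pose proof HM1.
  assert (Cond : (Y F - (Y w - 2*M)) * X F <= (X F - X w - 2*M) * (Y F - Y O)).
  { assert ((Y F - (Y w - 2*M)) * X F <= M * X F) by (apply Rmult_le_compat_r; unfold Pc in HF; lra).
    assert (M * X F <= M * (Pc m * N)) by (apply Rmult_le_compat_l; lra).
    assert (1 * (Y F - Y O) <= (X F - X w - 2*M) * (Y F - Y O)) by (apply Rmult_le_compat_r; lra).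
    lra. }
  assert (HXF : 0 < X F) by (unfold Pc in HF; lra).
  split; intros t Ht; unfold sepxy; rewrite HO.
  - destruct (diag_hi (X F) (Y O) (Y F) (X w) (Y w) (1 - t) ltac:(lra) HXF HY Cond);
    [right; left|right; right; left]; lra.
  - destruct (diag_hi (X F) (Y O) (Y F) (X w) (Y w) t Ht HXF HY Cond);
    [right; left|right; right; left]; lra.
Qed.

Lemma adj_R3 j s : in1 j m -> (s < 4)%nat -> vtx_adj n m (st j s) (st j (S s)).
Proof.
  intros Hj Hs. destruct (ch_ok j Hj) as [Hc _]. left. right; left. exists j. split; auto.
  destruct s as [|[|[|[|s]]]]; simpl; try lia.
  - left; auto.
  - right; right; right. exists (ch j). split; [auto|]. left; split; reflexivity.
  - right; right; right. exists (ch j). split; [auto|]. right; split; reflexivity.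
  - right; left; auto.
Qed.

Lemma XF_bounds j : in1 j m -> Pc m <= X (Fj j) <= Pc m * N /\ in1 (lvj j) n.
Proof.
  intros Hj. destruct (F_facts j Hj) as (Hl & _). rewrite X_F. destruct (PI_ge _ _ Hl).
  unfold Pc in *; split; [lra|auto].
Qed.

Lemma seg3_chv j s q : in1 j m -> (n <= q)%nat -> segfar (chv q) (st j s) (st j (S s)).
Proof.
  intros Hj Hq. destruct (Y_c_ge j Hj) as (A1 & A2 & A3 & A4 & A5 & A6).
  apply seg_y_below; rewrite chv_Y0 by auto;
  destruct s as [|[|[|[|[|s]]]]]; cbn [st]; lra.
Qed.

Lemma seg3_H j s j' : in1 j m -> in1 j' m -> (j' < j)%nat -> (s < 4)%nat ->
  segfar (VH j') (st j s) (st j (S s)).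
Proof.
  intros Hj Hj' Hlt Hs. destruct (sepH_x j' j Hj' Hj) as (A1 & A2 & A3 & A4).
  pose proof (gapP j' j ltac:(lia)).
  destruct (XF_bounds j Hj) as [HX _].
  destruct s as [|[|[|[|s]]]]; cbn [st]; try lia.
  - apply seg_y_below; lra.
  - destruct (F_facts j Hj) as (_ & _ & _ & [(_ & _ & HY)|(_ & _ & HY)]).
    + eapply proj1; apply (segd_lo (VH j') (VE j) (Fj j)); try (rewrite HY); jfacts Hj; jfacts Hj'; fin.
    + apply seg_y_below; try (rewrite HY); jfacts Hj; jfacts Hj'; fin.
  - destruct (F_facts j Hj) as (_ & _ & _ & [(_ & _ & HY)|(_ & _ & HY)]).
    + eapply proj2; apply (segd_lo (VH j') (VG j) (Fj j)); try (rewrite HY); jfacts Hj; jfacts Hj'; fin.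
    + apply seg_y_below; try (rewrite HY); jfacts Hj; jfacts Hj'; fin.
  - apply seg_y_below; [lra|]. unfold Y in *; simpl in *. lra.
Qed.

Lemma seg3_D j s j' : in1 j m -> in1 j' m -> (j < j')%nat ->
  segfar (VD j') (st j s) (st j (S s)).
Proof.
  intros Hj Hj' Hlt. destruct (sepH_x j j' Hj Hj') as (A1 & A2 & A3 & A4).
  destruct (sepD_x j' j Hj' Hj) as (B1 & B2).
  pose proof (gapP j j' ltac:(lia)).
  assert (C1 : Y (Fj j) + 2*M <= Y (VD j')).
  { destruct (F_facts j Hj) as (_ & _ & _ & [(_ & _ & HY)|(_ & _ & HY)]); rewrite HY;
    jfacts Hj; jfacts Hj'; fin. }
  assert (C2 : Y (VD j) + 2*M <= Y (VD j')) by (unfold Y in *; simpl in *; lra).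
  apply seg_y_above; destruct s as [|[|[|[|[|s]]]]]; cbn [st]; lra.
Qed.

Lemma X_tgt i : X (tgt i) = Pc m * INR i.
Proof. unfold tgt; destruct (asg i); reflexivity. Qed.

Lemma diag_tgt i j O : in1 i n -> in1 j m -> (O = VE j \/ O = VG j) ->
  segfar (tgt i) O (Fj j) /\ segfar (tgt i) (Fj j) O.
Proof.
  intros Hi Hj HO. destruct (XF_bounds j Hj) as [HX Hl].
  destruct (F_facts j Hj) as (_ & _ & _ & HF).
  assert (XO : X O = 0) by (destruct HO as [-> | ->]; reflexivity).
  destruct (Nat.lt_total i (lvj j)) as [Hlt|[Heq|Hgt]].
  - pose proof (gapP i (lvj j) ltac:(lia)). rewrite X_F in HX.
    unfold tgt; destruct (asg i);
    destruct HF as [(_ & _ & HY)|(_ & _ & HY)].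
    + split; apply seg_y_above; rewrite ?HY; destruct HO as [-> | ->]; jfacts Hj; fin.
    + apply segd_hi; rewrite ?X_F, ?HY; destruct HO as [-> | ->]; jfacts Hj; fin.
    + apply segd_lo; rewrite ?X_F, ?HY; destruct HO as [-> | ->]; jfacts Hj; fin.
    + split; apply seg_y_below; rewrite ?HY; destruct HO as [-> | ->]; jfacts Hj; fin.
  - subst i. destruct HF as [(_ & -> & HY)|(_ & -> & HY)].
    + split; apply seg_y_above; rewrite ?HY; destruct HO as [-> | ->]; jfacts Hj; fin.
    + split; apply seg_y_below; rewrite ?HY; destruct HO as [-> | ->]; jfacts Hj; fin.
  - pose proof (gapP (lvj j) i ltac:(lia)). pose proof (PI_ge i n Hi).
    split; apply seg_x_above; rewrite ?X_tgt, ?X_F, ?XO; lra.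
Qed.

Lemma seg3_tgt i j s : in1 i n -> in1 j m -> (s < 4)%nat ->
  segfar (tgt i) (st j s) (st j (S s)).
Proof.
  intros Hi Hj Hs.
  destruct s as [|[|[|[|s]]]]; cbn [st]; try lia.
  - apply seg_col; auto. rewrite (proj2 (tgt_vc i Hi)). simpl. unfold in1 in Hi; lia.
  - apply (diag_tgt i j (VE j)); auto.
  - apply (diag_tgt i j (VG j)); auto.
  - apply seg_col; auto. rewrite (proj2 (tgt_vc i Hi)). simpl. unfold in1 in Hi; lia.
Qed.

Lemma eqv_mk_c vp cp cp' bp : (forall j, in1 j m -> cp j = cp' j) ->
  eqv n m (mk vp cp bp) (mk vp cp' bp).
Proof. intros H [i|j|i|] Ha; simpl; auto. Qed.

Lemma cpa_j j s : cpa j s j = st j s.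
Proof. unfold cpa. rewrite Nat.ltb_irrefl, Nat.eqb_refl. auto. Qed.

Lemma step_R3 j s : in1 j m -> (s < 4)%nat -> stepok n m cl (R3 j s) (R3 j (S s)).
Proof.
  intros Hj Hs. apply step_ok with (a := Acl j).
  - unfold valid; simpl; auto.
  - simpl. rewrite !cpa_j. apply adj_R3; auto.
  - intros [i|j'|i|] Hb Hba; simpl; auto.
    assert (j' <> j) by congruence. unfold cpa.
    destruct (j' <? j)%nat; auto. destruct (Nat.eqb_spec j' j); [lia|auto].
  - simpl. rewrite !cpa_j. intros [i|j'|i|] Hb Hba; unfold valid in Hb; simpl in Hb; simpl.
    + apply seg3_tgt; auto.
    + assert (j' <> j) by congruence. unfold cpa.
      destruct (Nat.ltb_spec j' j); [apply seg3_H; auto|].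
      destruct (Nat.eqb_spec j' j); [lia|]. apply seg3_D; auto. lia.
    + apply seg3_chv; auto; lia.
    + apply seg3_chv; auto; lia.
Qed.

Lemma reach_R3 : reach n m cl (R3 1 0) (R3 m 4).
Proof.
  assert (forall k, (1 <= k <= m)%nat -> reach n m cl (R3 1 0) (R3 k 4)).
  { intros k Hk. induction k as [|k IH]; [lia|].
    assert (Hk' : in1 (S k) m) by (unfold in1; lia).
    assert (St : reach n m cl (R3 (S k) 0) (R3 (S k) 4)).
    { apply reach_chain with (f := R3 (S k)).
      - intros; apply step_R3; auto.
      - intros; apply ok_R3; auto. }
    destruct (Nat.eq_dec k 0) as [->|Hk0]; auto.
    eapply reach_trans; [apply IH; lia|].
    eapply reach_eqv_l; [exact St|].
    apply eqv_mk_c. intros j' Hj'. unfold cpa.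
    destruct (Nat.ltb_spec j' k); destruct (Nat.ltb_spec j' (S k));
    try destruct (Nat.eqb_spec j' k); try destruct (Nat.eqb_spec j' (S k)); subst; simpl; auto; lia. }
  apply H; lia.
Qed.

Definition cpb j s j' := if (j' <? j)%nat then VH j'
  else if (j' =? j)%nat then (match s with O => VI j | _ => VH j end) else VI j'.
Definition Q3 j s := P3 (cpb j s).

Lemma sepII j j' : j <> j' -> sepv (VI j) (VI j').
Proof. apply (sep_cf_cf true). Qed.

Lemma ok_Q3 j s : in1 j m -> okc n m cl (Q3 j s).
Proof.
  intros Hj. apply ok_P3.
  - intros j' Hj'. unfold cpb. destruct (j' <? j)%nat; [simpl; auto|].
    destruct (j' =? j)%nat; [destruct s; simpl; auto|simpl; auto].
  - intros j1 j2 H1 H2 H12. unfold cpb.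
    pose proof (sepH_x j1 j2 H1 H2). pose proof (sepH_x j2 j1 H2 H1).
    pose proof (sepH_x j j1 Hj H1). pose proof (sepH_x j1 j H1 Hj).
    pose proof (sepH_x j j2 Hj H2). pose proof (sepH_x j2 j H2 Hj).
    destruct (Nat.ltb_spec j1 j); destruct (Nat.ltb_spec j2 j);
    try destruct (Nat.eqb_spec j1 j); try destruct (Nat.eqb_spec j2 j); try lia; subst;
    try destruct s;
    first [ solve [apply sepHH; lia] | solve [apply sepII; lia] | solve [apply sep_yv; lra] ].
  - intros i j' Hi Hj'. unfold cpb.
    destruct (j' <? j)%nat; [apply tgt_c0; auto|].
    destruct (j' =? j)%nat; [destruct s|]; apply tgt_c0; auto.
  - intros j' Hj'. unfold cpb. destruct (Y_c_ge j' Hj') as (A1 & A2 & A3 & A4 & A5 & A6).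
    destruct (j' <? j)%nat; auto.
    destruct (Nat.eqb_spec j' j); [subst; destruct s; auto|auto].
Qed.

Lemma step_Q3 j : in1 j m -> stepok n m cl (Q3 j 0) (Q3 j 1).
Proof.
  intros Hj.
  assert (E : forall s, cpb j s j = match s with O => VI j | _ => VH j end).
  { intros. unfold cpb. rewrite Nat.ltb_irrefl, Nat.eqb_refl. auto. }
  apply step_ok with (a := Acl j).
  - unfold valid; simpl; auto.
  - simpl. rewrite !E. unfold vtx_adj, base_edge. right. right. left. exists j. split; [auto|]. right; right; left. auto.
  - intros [i|j'|i|] Hb Hba; simpl; auto.
    assert (j' <> j) by congruence. unfold cpb.
    destruct (j' <? j)%nat; auto. destruct (Nat.eqb_spec j' j); [lia|auto].
  - simpl. rewrite !E. intros [i|j'|i|] Hb Hba; unfold valid in Hb; simpl in Hb; simpl.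
    + apply seg_col; auto. rewrite (proj2 (tgt_vc i Hb)). simpl. unfold in1 in Hb; lia.
    + assert (j' <> j) by congruence. unfold cpb.
      destruct (sepH_x j' j Hb Hj) as (A1 & A2 & A3 & A4).
      destruct (sepH_x j j' Hj Hb) as (B1 & B2 & B3 & B4).
      destruct (Nat.ltb_spec j' j).
      * pose proof (gapP j' j ltac:(lia)). apply seg_y_below; [lra|unfold Y in *; simpl in *; lra].
      * destruct (Nat.eqb_spec j' j); [lia|].
        pose proof (gapP j j' ltac:(lia)). apply seg_y_above; [unfold Y in *; simpl in *; lra|lra].
    + destruct (Y_c_ge j Hj) as (A1 & A2 & A3 & A4 & A5 & A6).
      apply seg_y_below; rewrite chv_Y0 by lia; lra.
    + destruct (Y_c_ge j Hj) as (A1 & A2 & A3 & A4 & A5 & A6).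
      apply seg_y_below; rewrite chv_Y0 by lia; lra.
Qed.

Lemma reach_Q3 : reach n m cl (Q3 1 0) (Q3 m 1).
Proof.
  assert (forall k, (1 <= k <= m)%nat -> reach n m cl (Q3 1 0) (Q3 k 1)).
  { intros k Hk. induction k as [|k IH]; [lia|].
    assert (Hk' : in1 (S k) m) by (unfold in1; lia).
    assert (St : reach n m cl (Q3 (S k) 0) (Q3 (S k) 1)).
    { apply reach_chain with (f := Q3 (S k)) (N := 1%nat).
      - intros p Hp. replace p with 0%nat by lia. apply step_Q3; auto.
      - intros; apply ok_Q3; auto. }
    destruct (Nat.eq_dec k 0) as [->|Hk0]; auto.
    eapply reach_trans; [apply IH; lia|].
    eapply reach_eqv_l; [exact St|].
    apply eqv_mk_c. intros j' Hj'. unfold cpb.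
    destruct (Nat.ltb_spec j' k); destruct (Nat.ltb_spec j' (S k));
    try destruct (Nat.eqb_spec j' k); try destruct (Nat.eqb_spec j' (S k)); subst; simpl; auto; lia. }
  apply H; lia.
Qed.

Definition startc : cfg := fun a => agent_start a.
Definition goalc : cfg := fun a => agent_goal a.

Lemma reach_all : reach n m cl startc goalc.
Proof.
  assert (E1 : eqv n m startc (P1 false 0)).
  { intros [i|j|i|] Ha; unfold valid in Ha; simpl in *; unfold in1 in *.
    - unfold vp1. rewrite (proj2 (Nat.leb_gt i 0)) by lia. auto.
    - auto.
    - unfold chv. rewrite (proj2 (Nat.ltb_lt _ _)) by lia. f_equal; lia.
    - unfold chv. rewrite Nat.ltb_irrefl, Nat.eqb_refl. auto. }
  assert (E2 : eqv n m goalc (P1 true 0)).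
  { intros [i|j|i|] Ha; unfold valid in Ha; simpl in *; unfold in1 in *.
    - unfold vp1. rewrite (proj2 (Nat.leb_gt i 0)) by lia. auto.
    - auto.
    - unfold chv. rewrite (proj2 (Nat.ltb_lt _ _)) by lia. f_equal; lia.
    - unfold chv. rewrite Nat.ltb_irrefl, Nat.eqb_refl. auto. }
  assert (E3 : eqv n m (P3 (cf false)) (R3 1 0)).
  { apply eqv_mk_c. intros j Hj. unfold cpa, cf. unfold in1 in Hj.
    rewrite (proj2 (Nat.ltb_ge _ _)) by lia.
    destruct (Nat.eqb_spec j 1); subst; auto. }
  assert (E4 : eqv n m (R3 m 4) (Q3 m 1)).
  { apply eqv_mk_c. intros j Hj. unfold cpa, cpb. unfold in1 in Hj.
    destruct (Nat.ltb_spec j m); auto. destruct (Nat.eqb_spec j m); subst; auto. lia. }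
  assert (E5 : eqv n m (Q3 1 0) (P3 (cf true))).
  { apply eqv_mk_c. intros j Hj. unfold cpb, cf. unfold in1 in Hj.
    rewrite (proj2 (Nat.ltb_ge _ _)) by lia.
    destruct (Nat.eqb_spec j 1); subst; auto. }
  eapply reach_eqv_l; [|apply eqv_sym; exact E1].
  eapply reach_trans; [apply reach_P1|].
  eapply reach_eqv_l; [|apply eqv_sym; apply eqv_P1_P2].
  eapply reach_trans; [apply reach_P2|].
  eapply reach_eqv_l; [|apply eqv_sym; apply eqv_P2_P3].
  eapply reach_eqv_l; [|apply eqv_sym; exact E3].
  eapply reach_trans; [apply reach_R3|].
  eapply reach_eqv_l; [|apply eqv_sym; exact E4].
  eapply reach_trans; [apply reach_sym; apply reach_Q3|].
  eapply reach_eqv_l; [|apply eqv_sym; exact E5].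
  eapply reach_eqv_l; [|apply eqv_P2_P3].
  eapply reach_trans; [apply reach_sym; apply reach_P2|].
  eapply reach_eqv_l; [|apply eqv_P1_P2].
  eapply reach_trans; [apply reach_sym; apply reach_P1|].
  eapply reach_eqv_r; [|apply eqv_sym; exact E2].
  apply Rrefl; [apply ok_P1|intros a _; auto].
Qed.
End Geo.

Theorem lemma3 (n m : nat) (cl : nat -> nat -> lit) :
  wf_3cnf n m cl -> satisfiable n m cl -> has_solution (Iphi n m cl).
Proof.
  intros [Hn [Hm Hw]] [asg Hs].
  assert (Hcl : forall j k, in1 j m -> (k < 3)%nat -> in1 (lvar (cl j k)) n).
  { intros j k Hj Hk. apply (proj1 (Hw j Hj)); auto. }
  destruct (reach_sol n m cl _ _ (reach_all n m cl Hn Hm Hcl asg Hs)) as (T & s & H0 & HT & Ho & Hst).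
  exists T, s. split; [|split; [|split]].
  - intros a Ha. rewrite H0. reflexivity.
  - intros a Ha. apply (HT a Ha).
  - intros t Ht. apply Ho; auto.
  - intros t Ht. apply Hst; auto.
Qed.
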